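(* Let $d\geq 3$ and let $G$ be a graph on $n$ vertices that is not $M$-independent in $\mathbb{R}^{d-2}$. For $i=1,\dots,d$ let $k_i$ denote the dimension of the space of infinitesimal motions of a generic realization of $G$ in $\mathbb{C}^i$. Then $k_i\geq 2k_{i+1}-k_{i+2}+1$ for $i=1,\dots,d-2$.
   Context: For $p:V\to\mathbb{C}^i$, the rigidity matrix $R(G,p)$ is the $|E|\times i|V|$ matrix whose row for edge $uv$ has $p(u)-p(v)$ in the columns of $u$, $p(v)-p(u)$ in the columns of $v$, zeros elsewhere; the infinitesimal motions are the elements of $\ker R(G,p)$. A realization is generic if its coordinates are algebraically independent over $\mathbb{Q}$ (the dimension $k_i$ is the same for all generic realizations). $G$ is $M$-independent in $\mathbb{R}^k$ if the rows of $R(G,p)$ are linearly independent for a generic $p:V\to\mathbb{R}^k$. *)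

(* Defs.v *)
From HB Require Import structures.
From mathcomp Require Import all_boot all_order all_algebra.
From mathcomp Require Import mpoly.
From mathcomp Require Import reals.
From mathcomp Require Import complex.
Set Implicit Arguments. Unset Strict Implicit. Unset Printing Implicit Defensive.
Import Order.TTheory GRing.Theory Num.Theory.
Local Open Scope ring_scope.

Definition simple_graph (n : nat) (adj : rel 'I_n) : Prop :=
  ssrbool.symmetric adj /\ irreflexive adj.

(* Edges of the graph: unordered pairs {u,v}, represented by the ordered pair
   (u,v) with u < v. *)
Definition edge_type (n : nat) (adj : rel 'I_n) : predArgType :=
  {uv : 'I_n * 'I_n | (uv.1 < uv.2)%N && adj uv.1 uv.2}.

(* A realization p : V -> F^i is an n x i matrix (row v = p(v)). *)

Definition rigidity_row (F : ringType) (n i : nat) (p : 'M[F]_(n, i))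
    (u v : 'I_n) : 'M[F]_(n, i) :=
  \matrix_(w < n, j < i)
     ((w == u)%:R * (p u j - p v j) + (w == v)%:R * (p v j - p u j)).

Definition rigidity_matrix (F : ringType) (n : nat) (adj : rel 'I_n) (i : nat)
    (p : 'M[F]_(n, i)) : 'M[F]_(#|edge_type adj|, n * i) :=
  \matrix_(r < #|edge_type adj|)
     mxvec (rigidity_row p (val (enum_val r)).1 (val (enum_val r)).2).

(* Dimension of the space of infinitesimal motions: ker R(G,p) = the set of
   column vectors x with R x = 0, i.e. the row kernel of R^T. *)
Definition inf_motions_dim (F : fieldType) (n : nat) (adj : rel 'I_n) (i : nat)
    (p : 'M[F]_(n, i)) : nat :=
  \rank (kermx (rigidity_matrix adj p)^T).

(* Generic realization: the coordinates are algebraically independent over Q,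
   i.e. no nonzero rational polynomial in the n*i coordinates vanishes on them. *)
Definition generic (F : fieldType) (n i : nat) (p : 'M[F]_(n, i)) : Prop :=
  forall P : {mpoly rat[n * i]}, P != 0 ->
    (map_mpoly (ratr : rat -> F) P).@[fun k => mxvec p 0 k] != 0.

Definition M_independent (R : realType) (n : nat) (adj : rel 'I_n) (k : nat) : Prop :=
  forall p : 'M[R]_(n, k), generic p -> row_free (rigidity_matrix adj p).

(* Main.v *)
Require Import Defs.
From HB Require Import structures.
From mathcomp Require Import all_boot all_order all_algebra.
From mathcomp Require Import mpoly reals complex.
From mathcomp Require Import ring zify.
Import GRing.Theory.
Local Open Scope ring_scope.

Lemma minor_le_rank (F : fieldType) m n r (A : 'M[F]_(m,n)) (f : 'I_r -> 'I_m) (g : 'I_r -> 'I_n) :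
  mxsub f g A \in unitmx -> (r <= \rank A)%N.
Proof.
move=> /mxrank_unit <-.
have -> : mxsub f g A = rowsub f A *m colsub g 1%:M.
  by rewrite mulmx_colsub mulmx1; apply/matrixP => i j; rewrite !mxE.
apply: leq_trans (mxrankM_maxl _ _) _.
exact: mxrankS (rowsub_sub _ _).
Qed.

Lemma exists_minor (F : fieldType) m n (A : 'M[F]_(m,n)) :
  exists f : 'I_(\rank A) -> 'I_m, exists g : 'I_(\rank A) -> 'I_n, mxsub f g A \in unitmx.
Proof.
set f := maxrankfun A.
set B := (rowsub f A)^T.
have eB : \rank B = \rank A.
  rewrite mxrank_tr; have := maxrowsub_free A; rewrite /row_free => /eqP ->.
  by [].
set g0 := maxrankfun B.
exists f, (g0 \o cast_ord (esym eB)).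
have -> : mxsub f (g0 \o cast_ord (esym eB)) A = (rowsub (g0 \o cast_ord (esym eB)) B)^T.
  by apply/matrixP => i j; rewrite !mxE.
rewrite unitmx_tr rowsub_comp rowsub_cast -row_free_unit.
by rewrite row_free_castmx maxrowsub_free.
Qed.

Arguments exists_minor {F m n} A.
Arguments minor_le_rank {F m n r} A f g.

Definition ev (F : numFieldType) (N : nat) (x : 'I_N -> F) : {rmorphism {mpoly rat[N]} -> F} :=
  meval x \o map_mpoly (ratr : rat -> F).

Arguments ev {F N} x.

Lemma evE (F : numFieldType) (N : nat) (x : 'I_N -> F) P : ev x P = (map_mpoly ratr P).@[x].
Proof. by []. Qed.

Lemma spec_rank (F K : numFieldType) N m1 m2 (M : 'M[{mpoly rat[N]}]_(m1,m2))
  (x : 'I_N -> F) (y : 'I_N -> K) :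
  (forall P, P != 0 -> ev y P != 0) ->
  (\rank (map_mx (ev x) M) <= \rank (map_mx (ev y) M))%N.
Proof.
move=> gy.
have [f [g u]] := exists_minor (map_mx (ev x) M).
apply: (minor_le_rank _ f g).
have -> : mxsub f g (map_mx (ev y) M) = map_mx (ev y) (mxsub f g M).
  by apply/matrixP => i j; rewrite !mxE.
have ex : mxsub f g (map_mx (ev x) M) = map_mx (ev x) (mxsub f g M).
  by apply/matrixP => i j; rewrite !mxE.
move: u; rewrite ex !unitmxE !det_map_mx !unitfE => u.
by apply: gy; apply/eqP => h; move: u; rewrite h rmorph0 eqxx.
Qed.

Set Implicit Arguments. Unset Strict Implicit.

Section Rig.
Variables (n : nat) (adj : rel 'I_n).

Definition Xu k : 'M[{mpoly rat[n * k]}]_(n, k) := \matrix_(w, j) 'X_(mxvec_index w j).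

Definition vec (F : Type) k (q : 'M[F]_(n, k)) : 'I_(n * k) -> F := fun t => mxvec q 0 t.

Lemma ev_Xu (F : numFieldType) k (q : 'M[F]_(n, k)) : map_mx (ev (vec q)) (Xu k) = q.
Proof.
apply/matrixP => w j; rewrite !mxE evE map_mpolyX mevalXU /vec mxvecE.
by []. Qed.

Notation E := #|edge_type adj|.
Notation eu r := (val (enum_val r)).1.
Notation ev_ r := (val (enum_val r)).2.

Definition Drow (F : nzRingType) k (q : 'M[F]_(n,k)) (w : 'I_n) (j : 'I_k) : 'rV[F]_E :=
  \row_r ((w == eu r)%:R * (q (eu r) j - q (ev_ r) j)
        + (w == ev_ r)%:R * (q (ev_ r) j - q (eu r) j)).

Lemma RT_row (F : nzRingType) k (q : 'M[F]_(n,k)) w j :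
  row (mxvec_index w j) (rigidity_matrix adj q)^T = Drow q w j.
Proof. by apply/rowP => r; rewrite !mxE mxvecE mxE. Qed.

Lemma map_rig (R S : nzRingType) (f : {rmorphism R -> S}) k (q : 'M[R]_(n,k)) :
  map_mx f (rigidity_matrix adj q) = rigidity_matrix adj (map_mx f q).
Proof.
apply/matrixP => r c; rewrite !mxE; case: (mxvec_indexP c) => w j.
by rewrite !mxvecE !mxE rmorphD !rmorphM !rmorphB !rmorph_nat ?mxE.
Qed.

Lemma map_colsub (R S : Type) (f : R -> S) m k k' (h : 'I_k -> 'I_k') (q : 'M[R]_(m,k')) :
  map_mx f (colsub h q) = colsub h (map_mx f q).
Proof. by apply/matrixP => ? ?; rewrite !mxE. Qed.

Definition vrow (F : nzRingType) k (q : 'M[F]_(n,k)) (jb jc : 'I_k) : 'rV[F]_E :=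
  \row_r ((q (eu r) jc - q (ev_ r) jc) * (q (eu r) jb - q (ev_ r) jb)).

Lemma map_vrow (R S : nzRingType) (f : {rmorphism R -> S}) k (q : 'M[R]_(n,k)) jb jc :
  map_mx f (vrow q jb jc) = vrow (map_mx f q) jb jc.
Proof. by apply/rowP => r; rewrite !mxE rmorphM !rmorphB. Qed.

Lemma Drow_sub (F : fieldType) k (q : 'M[F]_(n,k)) w j :
  (Drow q w j <= (rigidity_matrix adj q)^T)%MS.
Proof. by rewrite -RT_row row_sub. Qed.

Lemma R_sub (F : fieldType) k k' (q : 'M[F]_(n,k)) (q' : 'M[F]_(n,k')) (h : 'I_k -> 'I_k') :
  (forall w j, q w j = q' w (h j)) ->
  ((rigidity_matrix adj q)^T <= (rigidity_matrix adj q')^T)%MS.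
Proof.
move=> H; apply/row_subP => c; case: (mxvec_indexP c) => w j.
rewrite RT_row.
have -> : Drow q w j = Drow q' w (h j) by apply/rowP => r; rewrite !mxE !H.
exact: Drow_sub.
Qed.

Lemma edge_lt (r : 'I_E) : (eu r < ev_ r)%N.
Proof. by have := valP (enum_val r) => /andP[]. Qed.

Lemma vsum (F : fieldType) k (q : 'M[F]_(n,k)) j (y : 'I_n -> F) :
  \sum_w y w *: Drow q w j = \row_r ((y (eu r) - y (ev_ r)) * (q (eu r) j - q (ev_ r) j)).
Proof.
apply/rowP => r; rewrite summxE mxE.
under eq_bigr do rewrite !mxE.
have uv : eu r != ev_ r by rewrite neq_ltn edge_lt.
rewrite (bigD1 (eu r)) //= (bigD1 (ev_ r)) /=; last by rewrite eq_sym.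
rewrite big1 ?addr0; last first.
  by move=> w /andP[wu wv]; rewrite (negbTE wu) (negbTE wv) !mul0r add0r mulr0.
rewrite !eqxx (negbTE uv) eq_sym (negbTE uv) !mul0r !mul1r addr0 add0r.
rewrite -opprB mulrN; ring.
Qed.


Lemma le_rank_sub (F K : numFieldType) k k' (q : 'M[F]_(n,k)) (P : 'M[K]_(n,k'))
  (h : 'I_k -> 'I_k') : injective h -> generic P ->
  (\rank (rigidity_matrix adj q) <= \rank (rigidity_matrix adj (colsub h P)))%N.
Proof.
move=> hi gP.
pose qx : 'M[F]_(n,k') := \matrix_(w, j') \sum_(j | h j == j') q w j.
have eq : colsub h qx = q.
  apply/matrixP => w j; rewrite !mxE (big_pred1 j) // => j0 /=; exact: inj_eq.
have := @spec_rank F K _ _ _ (rigidity_matrix adj (colsub h (Xu k'))) (vec qx) (vec P).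
by rewrite !map_rig !map_colsub !ev_Xu eq; apply => P0 /gP.
Qed.

Lemma ge_rank_sub (F K : numFieldType) k k' (q : 'M[F]_(n,k)) (P : 'M[K]_(n,k'))
  (h : 'I_k -> 'I_k') : generic q ->
  (\rank (rigidity_matrix adj (colsub h P)) <= \rank (rigidity_matrix adj q))%N.
Proof.
move=> gq.
have := @spec_rank K F _ _ _ (rigidity_matrix adj (Xu k)) (vec (colsub h P)) (vec q).
by rewrite !map_rig !ev_Xu; apply => P0 /gq.
Qed.

End Rig.

Section Core.
Variables (R : realType) (n : nat) (adj : rel 'I_n).
Notation E := #|edge_type adj|.
Notation eu r := (val (enum_val r)).1.
Notation ev_ r := (val (enum_val r)).2.
Notation S X := (rigidity_matrix adj X)^T.

Lemma Drow_col (F : nzRingType) k k' (q : 'M[F]_(n,k)) (q' : 'M[F]_(n,k')) j j' w :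
  (forall w', q w' j = q' w' j') -> Drow adj q w j = Drow adj q' w j'.
Proof. by move=> H; apply/rowP => r; rewrite !mxE !H. Qed.

Lemma key (F : nzRingType) (r r0 : 'I_E) :
  (((eu r == ev_ r0)%:R - (ev_ r == ev_ r0)%:R) * ((eu r == eu r0)%:R - (ev_ r == eu r0)%:R) : F)
  = - (r == r0)%:R.
Proof.
have ltr := edge_lt r; have lt0 := edge_lt r0.
have uv : (eu r0 == ev_ r0) = false by apply/negbTE; rewrite neq_ltn lt0.
case: (eqVneq r r0) => [-> | ne].
  by rewrite !eqxx uv eq_sym uv subr0 sub0r mulN1r.
rewrite mulr0n oppr0.
have key2 : ~ (eu r = eu r0 /\ ev_ r = ev_ r0).
  move=> [e1 e2]; move/eqP: ne; apply; apply: enum_val_inj; apply: val_inj.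
  by rewrite [LHS]surjective_pairing [RHS]surjective_pairing e1 e2.
case: (eqVneq (eu r) (eu r0)) => [xu | xu].
  have yv : (ev_ r == ev_ r0) = false by apply/negbTE/eqP => e; apply: key2.
  by rewrite xu uv yv subrr mul0r.
case: (eqVneq (ev_ r) (eu r0)) => [yu | yu].
  have xv : (eu r == ev_ r0) = false.
    by apply/negbTE; rewrite neq_ltn (ltn_trans ltr) // yu.
  by rewrite xv yu uv subrr mul0r.
by rewrite subrr mulr0.
Qed.

Lemma core m k0 (P : 'M[R[i]]_(n, m.+2)) (pi : 'M[R[i]]_(n, m)) (pi1 : 'M[R[i]]_(n, m.+1))
   (q0 : 'M[R]_(n, k0)) (hk : (m <= k0)%N) :
  generic P -> generic pi -> generic pi1 -> generic q0 ->
  ~~ row_free (rigidity_matrix adj q0) ->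
  (\rank (rigidity_matrix adj pi) + \rank (rigidity_matrix adj P) + 1
     <= 2 * \rank (rigidity_matrix adj pi1))%N.
Proof.
move=> gP gpi gpi1 gq0 nrf.
pose ha : 'I_m -> 'I_m.+2 := widen_ord (leq_trans (leqnSn m) (leqnSn m.+1)).
pose hab : 'I_m.+1 -> 'I_m.+2 := widen_ord (leqnSn m.+1).
pose hac : 'I_m.+1 -> 'I_m.+2 := fun j => if j == ord_max then ord_max else hab j.
pose jb := hab ord_max.
pose jc : 'I_m.+2 := ord_max.
pose a := colsub ha P.
pose ab := colsub hab P.
pose ac := colsub hac P.
have r1 : (\rank (rigidity_matrix adj pi) <= \rank (rigidity_matrix adj a))%N.
  apply: le_rank_sub => // x y /(congr1 val) /= e; exact: val_inj.
have r2 : (\rank (rigidity_matrix adj ab) <= \rank (rigidity_matrix adj pi1))%N.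
  exact: ge_rank_sub.
have r3 : (\rank (rigidity_matrix adj ac) <= \rank (rigidity_matrix adj pi1))%N.
  exact: ge_rank_sub.
have r4 : (\rank (S a) < E)%N.
  pose h0 : 'I_m -> 'I_k0 := widen_ord hk.
  have h1 := le_rank_sub adj a (P := q0) (h := h0).
  have h2 : (S (colsub h0 q0) <= S q0)%MS by apply: (R_sub adj (h := h0)) => w j; rewrite mxE.
  have h3 : (\rank (rigidity_matrix adj q0) < E)%N.
    by move: nrf; rewrite /row_free ltn_neqAle rank_leq_row andbT.
  rewrite mxrank_tr; apply: leq_ltn_trans h3.
  apply: leq_trans (h1 _ gq0) _; first by move=> x y /(congr1 val) /= e; exact: val_inj.
  by rewrite -mxrank_tr -[X in (_ <= X)%N]mxrank_tr mxrankS.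
have sub1 : (S a <= S ab)%MS.
  apply: (R_sub adj (h := widen_ord (leqnSn m))) => w j; rewrite !mxE.
  by congr (P w _); apply: val_inj.
have sub2 : (S a <= S ac)%MS.
  apply: (R_sub adj (h := widen_ord (leqnSn m))) => w j; rewrite !mxE /hac.
  case: eqP => [/(congr1 val) /= e|_]; first by have := ltn_ord j; rewrite e ltnn.
  by congr (P w _); apply: val_inj.
have sub3 : (S P <= S ab + S ac)%MS.
  apply/row_subP => c; case: (mxvec_indexP c) => w j; rewrite RT_row.
  case: (ltnP j m.+1) => hj.
    rewrite (@Drow_col _ _ _ P ab j (Ordinal hj)); last first.
      by move=> w'; rewrite !mxE; congr (P w' _); apply: val_inj.
    exact: submx_trans (Drow_sub _ _ _ _) (addsmxSl _ _).
  rewrite (@Drow_col _ _ _ P ac j ord_max); last first.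
    move=> w'; rewrite !mxE /hac eqxx; congr (P w' _); apply: val_inj => /=.
    by apply/eqP; rewrite eqn_leq hj -ltnS ltn_ord.
  exact: submx_trans (Drow_sub _ _ _ _) (addsmxSr _ _).
pose v := vrow adj P jb jc.
have vsub1 : (v <= S ab)%MS.
  have -> : v = \sum_w P w jc *: Drow adj ab w ord_max.
    by rewrite vsum; apply/rowP => r; rewrite !mxE.
  by apply: summx_sub => w _; apply: scalemx_sub; apply: Drow_sub.
have vsub2 : (v <= S ac)%MS.
  have -> : v = \sum_w P w jb *: Drow adj ac w ord_max.
    by rewrite vsum; apply/rowP => r; rewrite !mxE /hac eqxx mulrC.
  by apply: summx_sub => w _; apply: scalemx_sub; apply: Drow_sub.
have vnot : ~~ (v <= S a)%MS.
  apply/negP => vin.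
  have cz : cokermx (S a) != 0.
    apply/eqP => c0; move: (mxrank_coker (S a)); rewrite c0 mxrank0 => /esym/eqP.
    by rewrite subn_eq0 leqNgt r4.
  case/matrix0Pn: cz => r0 [c0 nz].
  pose om := col c0 (cokermx (S a)).
  have Som : S a *m om = 0 by rewrite /om colE mulmxA mulmx_coker mul0mx.
  pose u0 := eu r0. pose v0 := ev_ r0.
  pose X0 : 'M[R[i]]_(n, m.+2) := \matrix_(w, j) if (j < m)%N then \sum_(j0 | ha j0 == j) a w j0
     else if j == jb then (w == u0)%:R else (w == v0)%:R.
  have hai : injective ha by move=> x y /(congr1 val) /= e; exact: val_inj.
  have eX : colsub ha X0 = a.
    apply/matrixP => w j; rewrite [LHS]mxE /X0 [LHS]mxE /= ltn_ord (big_pred1 j) //.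
  have := @spec_rank _ _ _ _ _ (col_mx (rigidity_matrix adj (colsub ha (Xu n m.+2)))^T
        (vrow adj (Xu n m.+2) jb jc)) (vec X0) (vec P) (fun P0 h => gP P0 h).
  rewrite !map_col_mx -!map_trmx !map_rig !map_colsub !map_vrow !ev_Xu eX.
  rewrite -/a -!addsmxE (addsmx_idPl vin).
  apply/negP; rewrite -ltnNge; apply: rank_ltmx.
  rewrite ltmxE addsmxSl /= addsmx_sub submx_refl /=.
  have hjc2 : (jc == jb) = false by apply/eqP => /(congr1 val) /=; lia.
  have X0c w : X0 w jc = (w == v0)%:R by rewrite /X0 mxE /= ltnNge leqnSn /= hjc2.
  have X0b w : X0 w jb = (w == u0)%:R by rewrite /X0 mxE /= ltnn eqxx.
  have vE : vrow adj X0 jb jc = \row_r (- (r == r0)%:R).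
    by apply/rowP => r; rewrite [LHS]mxE [RHS]mxE !X0c !X0b key.
  rewrite vE; apply/negP => /submxP [z ez].
  have : \row_r (- (r == r0)%:R) *m om = 0 by rewrite ez -mulmxA Som mulmx0.
  move/matrixP/(_ 0 0); rewrite [LHS]mxE [RHS]mxE.
  rewrite (bigD1 r0) //= big1 ?addr0; last first.
    by move=> r /negbTE ne; rewrite [X in X * _]mxE ne oppr0 mul0r.
  rewrite [X in X * _]mxE eqxx mulN1r /om [X in - X]mxE => /eqP.
  by rewrite oppr_eq0 (negbTE nz).

have hcap : (S a + v <= S ab :&: S ac)%MS.
  by rewrite sub_capmx !addsmx_sub sub1 sub2 vsub1 vsub2.
have hlt : (\rank (S a) < \rank (S a + v))%N.
  by apply: rank_ltmx; rewrite ltmxE addsmxSl /= addsmx_sub submx_refl.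
have e1 := mxrank_sum_cap (S ab) (S ac).
have e2 := mxrankS sub3. have e3 := mxrankS hcap.
move: r1 r2 r3 e1 e2 e3 hlt; rewrite !mxrank_tr; lia.
Qed.
End Core.

Unset Implicit Arguments. Set Strict Implicit.

Theorem lemma3p10 (R : realType) (d n : nat) (adj : rel 'I_n) :
  (3 <= d)%N ->
  simple_graph adj ->
  ~ M_independent R adj (d - 2) ->
  forall (p : forall i : nat, 'M[R[i]]_(n, i)),
    (forall i : nat, (1 <= i <= d)%N -> generic (p i)) ->
    forall i : nat, (1 <= i <= d - 2)%N ->
      ((inf_motions_dim adj (p i))%:Z >=
        2 * (inf_motions_dim adj (p i.+1))%:Z
          - (inf_motions_dim adj (p i.+2))%:Z + 1)%R.
Proof.
move=> d3 sg nMI p gen i /andP[i1 id].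
apply/negPn/negP => ng.
apply: nMI => q0 gq0.
apply/negPn/negP => nrf.
move/negP: ng; apply.
have g0 : generic (p i) by apply: gen; rewrite i1 /=; lia.
have g1 : generic (p i.+1) by apply: gen; lia.
have g2 : generic (p i.+2) by apply: gen; lia.
have H := core id g2 g0 g1 gq0 nrf.
rewrite /inf_motions_dim !mxrank_ker !mxrank_tr.
have b0 := rank_leq_col (rigidity_matrix adj (p i)).
have b1 := rank_leq_col (rigidity_matrix adj (p i.+1)).
have b2 := rank_leq_col (rigidity_matrix adj (p i.+2)).
move: H b0 b1 b2.
set x0 := \rank (rigidity_matrix adj (p i)).
set x1 := \rank (rigidity_matrix adj (p i.+1)).
set x2 := \rank (rigidity_matrix adj (p i.+2)).
rewrite !mulnS; lia.
Qed.
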